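(* Let $n$ be prime, let $m\ge 1$ and let $d$ be an integer with $2<d\le n$. Let $X$ be the process in which $m$ balls are placed sequentially into $n$ bins, each ball choosing two distinct bins uniformly at random (independently of all other balls) and being placed in the less loaded of the two. Let $Y$ be the corresponding process with $d$ choices generated by double hashing. Then $X$ stochastically majorizes $Y$: there is a coupling of the two processes such that for every $t=0,1,\dots,m$, the sorted load vector $\vec{x}(t)$ of $X$ after $t$ balls majorizes the sorted load vector $\vec{y}(t)$ of $Y$ after $t$ balls. Consequently, for every value $c$, $\Pr(x_1(m)\ge c)\ge \Pr(y_1(m)\ge c)$, where $x_1,y_1$ denote the maximum loads. *)

(* Defs.v *)
(* finite probability spaces are handled by explicit counting. *)
From HB Require Import structures.
From mathcomp Require Import all_boot all_order all_algebra.
Set Implicit Arguments. Unset Strict Implicit. Unset Printing Implicit Defensive.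
Import Order.TTheory GRing.Theory Num.Theory.

Definition loads (n : nat) := {ffun 'I_n -> nat}.

Definition valid_tiebreak (n : nat) (tb : loads n -> {set 'I_n} -> 'I_n) : Prop :=
  forall (v : loads n) (S : {set 'I_n}), S != set0 ->
    tb v S \in S /\ (forall j, j \in S -> v (tb v S) <= v j).

Definition place (n : nat) (tb : loads n -> {set 'I_n} -> 'I_n)
  (v : loads n) (S : {set 'I_n}) : loads n :=
  [ffun i => v i + (i == tb v S)].

Definition run (n : nat) (T : Type) (tb : loads n -> {set 'I_n} -> 'I_n)
  (ch : T -> {set 'I_n}) (s : seq T) : loads n :=
  foldl (fun v x => place tb v (ch x)) [ffun => 0%N] s.

(* random choice of one ball in the two-choice process:
   an (ordered) pair of distinct bins, uniformly *)
Definition stepX (n : nat) := {p : 'I_n * 'I_n | p.1 != p.2}.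
Definition choiceX (n : nat) (p : stepX n) : {set 'I_n} :=
  [set (val p).1; (val p).2].

(* random choice of one ball for double hashing: f uniform in [0,n),
   g uniform in [1,n); the d choices are f + k g mod n, k = 0..d-1 *)
Definition stepY (n : nat) := {p : 'I_n * 'I_n | 0 < (val p.2)}.
Definition choiceY (n d : nat) (p : stepY n) : {set 'I_n} :=
  [set i : 'I_n | [exists k : 'I_d,
     val i == ((val (val p).1) + k * (val (val p).2)) %% n]].

Definition loads_at (n m : nat) (T : finType) (tb : loads n -> {set 'I_n} -> 'I_n)
  (ch : T -> {set 'I_n}) (w : {ffun 'I_m -> T}) (t : nat) : loads n :=
  run tb ch (take t (codom w)).

Definition sorted_loads (n : nat) (v : loads n) : seq nat := sort geq (codom v).

Definition max_load (n : nat) (v : loads n) : nat := nth 0 (sorted_loads v) 0.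

(* xs majorizes ys (both sorted non-increasingly) *)
Definition majorizes (xs ys : seq nat) : Prop :=
  sumn xs = sumn ys /\
  forall k : nat, \sum_(i < k) nth 0 ys i <= \sum_(i < k) nth 0 xs i.

(* Main.v *)
Require Import Defs.
From HB Require Import structures.
From mathcomp Require Import all_boot all_order all_algebra.
From mathcomp Require Import fingroup perm zify.
Import Order.TTheory GRing.Theory Num.Theory.
Set Implicit Arguments. Unset Strict Implicit. Unset Printing Implicit Defensive.

Definition Gs (n : nat) (th : nat) (v : loads n) : nat := \sum_(i < n) (v i - th).

Lemma G_place n th tb (v : loads n) S :
  Gs th (place tb v S) = Gs th v + (th <= v (tb v S)).
Proof.
rewrite /Gs. set b := tb v S.
rewrite (bigD1 b) //= [in RHS](bigD1 b) //= ffunE eqxx.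
rewrite (eq_bigr (fun i => v i - th)); last first.
  by move=> i /negbTE Hi; rewrite ffunE Hi addn0.
set s := \sum_(i | _) _.
case: (leqP th (v b)) => H /=; lia.
Qed.

Lemma card_sum n (P : pred 'I_n) : #|[set i | P i]| = \sum_i (P i : nat).
Proof.
rewrite -sum1_card big_mkcond /=; apply: eq_bigr => i _; rewrite inE.
by case: (P i).
Qed.

Lemma G_S n th (v : loads n) : Gs th v = Gs th.+1 v + #|[set i | th < v i]|.
Proof.
rewrite card_sum /Gs -big_split /=; apply: eq_bigr => i _.
case: (ltnP th (v i)) => H /=; lia.
Qed.

Definition before n (v : loads n) (j i : 'I_n) : bool :=
  (v i < v j) || ((v j == v i) && (j < i)).
Definition rk n (v : loads n) (i : 'I_n) : nat := #|[set j | before v j i]|.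

Lemma before_irr n (v : loads n) i : ~~ before v i i.
Proof. by rewrite /before ltnn eqxx ltnn. Qed.

Lemma before_trans n (v : loads n) i j k :
  before v i j -> before v j k -> before v i k.
Proof.
rewrite /before => /orP[H1|/andP[/eqP H1 H2]] /orP[H3|/andP[/eqP H3 H4]];
  apply/orP.
- left; lia.
- left; lia.
- left; lia.
- right; apply/andP; split; [apply/eqP; lia | lia].
Qed.

Lemma before_total n (v : loads n) i j :
  i != j -> before v i j || before v j i.
Proof.
move=> Hne; rewrite /before.
case: (ltngtP (v i) (v j)) => H //=.
by rewrite -neq_ltn.
Qed.

Lemma rk_lt_before n (v : loads n) i j : before v i j -> rk v i < rk v j.
Proof.
move=> Hij; apply: proper_card; rewrite properE; apply/andP; split.
  by apply/subsetP => k; rewrite !inE => H; apply: before_trans H Hij.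
apply/subsetPn; exists i; rewrite !inE //; exact: before_irr.
Qed.

Lemma rk_inj n (v : loads n) : injective (rk v).
Proof.
move=> i j E; apply/eqP; apply/negPn/negP => Hne.
by case/orP: (before_total v Hne) => /rk_lt_before; rewrite E ltnn.
Qed.

Lemma rk_mono n (v : loads n) i j : rk v i < rk v j -> v j <= v i.
Proof.
case: (eqVneq i j) => [-> |Hne]; first by rewrite ltnn.
case/orP: (before_total v Hne) => H.
  move=> _; move: H; rewrite /before => /orP[/ltnW // | /andP[/eqP -> _] //].
move/rk_lt_before: H => H1 H2; lia.
Qed.

Lemma rk_lt_n n (v : loads n) i : rk v i < n.
Proof.
rewrite -{2}(card_ord n) -cardsT; apply: proper_card; rewrite properE.
rewrite subsetT /=; apply/subsetPn; exists i; rewrite !inE //; exact: before_irr.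
Qed.

Definition rko n (v : loads n) (i : 'I_n) : 'I_n := Ordinal (rk_lt_n v i).
Lemma rko_inj n (v : loads n) : injective (rko v).
Proof. by move=> i j /(congr1 val) /= /rk_inj. Qed.
Definition pr n (v : loads n) : {perm 'I_n} := perm (@rko_inj n v).
Definition pi n (vX vY : loads n) (u : 'I_n) : 'I_n := ((pr vX)^-1)%g (pr vY u).

Lemma pi_inj n (vX vY : loads n) : injective (pi vX vY).
Proof. by move=> a b; rewrite /pi => /perm_inj /perm_inj. Qed.

Lemma rk_pi n (vX vY : loads n) u : rk vX (pi vX vY u) = rk vY u.
Proof.
have := permKV (pr vX) (pr vY u); rewrite /pi !permE => /(congr1 val) //.
Qed.

Lemma rk_onto n (v : loads n) (s : 'I_n) : rk v (((pr v)^-1)%g s) = s.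
Proof. by have := permKV (pr v) s; rewrite permE => /(congr1 val). Qed.

Lemma ngt0 n (i : 'I_n) : 0 < n.
Proof. exact: leq_ltn_trans (leq0n i) (ltn_ord i). Qed.

Definition sndY n (y : stepY n) : 'I_n :=
  Ordinal (ltn_pmod (val (val y).1 + val (val y).2) (ngt0 (val y).1)).

Lemma fst_neq_snd n (y : stepY n) : (val y).1 != sndY y.
Proof.
case: y => [[f g] Hg]; rewrite /sndY /=; move: Hg => /= Hg.
apply/eqP => /(congr1 val) /= E.
have := ltn_ord f; have := ltn_ord g; move: Hg E; move: (val f) (val g) => a b.
move=> Hb E Hbn Han; case: (ltnP (a + b) n) => H.
  by move: E; rewrite modn_small //; lia.
move: E; rewrite -(subnK H) modnDr modn_small; lia.
Qed.

Lemma sigma_ok n (vX vY : loads n) (y : stepY n) :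
  (pi vX vY (val y).1, pi vX vY (sndY y)).1 != (pi vX vY (val y).1, pi vX vY (sndY y)).2.
Proof. by rewrite /= (inj_eq (@pi_inj n vX vY)) fst_neq_snd. Qed.

Definition sigma n (vX vY : loads n) (y : stepY n) : stepX n :=
  exist _ (pi vX vY (val y).1, pi vX vY (sndY y)) (sigma_ok vX vY y).

Lemma sigma_inj n (vX vY : loads n) : injective (sigma vX vY).
Proof.
move=> [[f g] Hg] [[f' g'] Hg'] /(congr1 val) /= [/pi_inj Ef /pi_inj Es].
subst f'; move: Es => /(congr1 val) /= Es.
have Eg : val g = val g'.
  by move: Es => /eqP; rewrite eqn_modDl !modn_small // => /eqP.
apply: val_inj => /=; congr pair; exact: val_inj.
Qed.

Lemma fst_in_choiceY n d (Hd : 0 < d) (y : stepY n) : (val y).1 \in choiceY d y.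
Proof.
rewrite inE; apply/existsP; exists (Ordinal Hd) => /=.
by rewrite mul0n addn0 modn_small.
Qed.

Lemma snd_in_choiceY n d (Hd : 1 < d) (y : stepY n) : sndY y \in choiceY d y.
Proof.
by rewrite inE; apply/existsP; exists (Ordinal Hd) => /=; rewrite mul1n.
Qed.

Definition inv n (vX vY : loads n) :=
  Gs 0 vY = Gs 0 vX /\ forall th, Gs th vY <= Gs th vX.

Lemma key n th (vX vY : loads n) w : (forall t, Gs t vY <= Gs t vX) ->
  th <= vY w -> vX (pi vX vY w) < th -> Gs th vY < Gs th vX.
Proof.
move=> Hall H1 H2.
case: th H1 H2 => [|th] H1 H2; first by [].
have A : forall i, th < vX i -> rk vX i < rk vY w.
  move=> i Hi; rewrite -(rk_pi vX vY w).
  case: (ltngtP (rk vX i) (rk vX (pi vX vY w))) => // H.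
    by move/rk_mono: H => H; lia.
  by move/rk_inj: H => H; subst i; lia.
have C : #|[set i | th < vX i]| < #|[set i | th < vY i]|.
  rewrite -(card_imset [set i | th < vX i] (@rko_inj n vX)).
  rewrite -(card_imset [set i | th < vY i] (@rko_inj n vY)).
  apply: proper_card; rewrite properE; apply/andP; split.
    apply/subsetP => z /imsetP [i]; rewrite inE => Hi ->.
    apply/imsetP; exists (((pr vY)^-1)%g (rko vX i)).
      rewrite inE; have := A i Hi; rewrite -[X in X < _](rk_onto vY (rko vX i)).
      move/rk_mono; lia.
    by apply: val_inj; rewrite /= rk_onto.
  apply/subsetPn; exists (rko vY w).
    by apply/imsetP; exists w; rewrite // inE.
  apply/imsetP => [[i]]; rewrite inE => Hi /(congr1 val) /= E.
  by have := A i Hi; rewrite E ltnn.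
have := Hall th; rewrite !(G_S th) => H; lia.
Qed.

Lemma step_inv n d tbX tbY (vX vY : loads n) (y : stepY n) : 1 < d ->
  valid_tiebreak tbX -> valid_tiebreak tbY -> inv vX vY ->
  inv (place tbX vX (choiceX (sigma vX vY y))) (place tbY vY (choiceY d y)).
Proof.
move=> Hd VX VY [H0 Hth].
set x := sigma vX vY y; set SX := choiceX x; set SY := choiceY d y.
have u_in : (val y).1 \in SY by apply: fst_in_choiceY; apply: ltnW.
have s_in : sndY y \in SY by apply: snd_in_choiceY.
have nSY : SY != set0 by apply/set0Pn; exists (val y).1.
have nSX : SX != set0 by apply/set0Pn; exists (val x).1; rewrite /SX /choiceX !inE eqxx.
have [inY minY] := VY vY SY nSY; have [inX minX] := VX vX SX nSX.
split; first by rewrite !G_place H0.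
move=> th; rewrite !G_place.
case: (leqP th (vY (tbY vY SY))) => HY; last first.
  by rewrite addn0; apply: leq_trans (Hth th) (leq_addr _ _).
case: (leqP th (vX (tbX vX SX))) => HX; first by rewrite leq_add2r.
rewrite addn0 addn1.
have Hu := minY _ u_in; have Hs := minY _ s_in.
move: inX HX; rewrite /SX /choiceX !inE /= => /orP[/eqP -> | /eqP ->] HX.
  by apply: (key Hth _ HX); apply: leq_trans HY Hu.
by apply: (key Hth _ HX); apply: leq_trans HY Hs.
Qed.

Fixpoint buildX n d tbX tbY (vX vY : loads n) (ys : seq (stepY n)) : seq (stepX n) :=
  if ys is y :: ys' then
    sigma vX vY y :: buildX d tbX tbY (place tbX vX (choiceX (sigma vX vY y)))
                                     (place tbY vY (choiceY d y)) ys'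
  else [::].

Lemma size_buildX n d tbX tbY (vX vY : loads n) ys :
  size (buildX d tbX tbY vX vY ys) = size ys.
Proof. by elim: ys vX vY => //= y ys IH vX vY; rewrite IH. Qed.

Lemma build_inv n d tbX tbY (ys : seq (stepY n)) : 1 < d ->
  valid_tiebreak tbX -> valid_tiebreak tbY -> forall vX vY, inv vX vY ->
  forall t, inv (foldl (fun v x => place tbX v (@choiceX n x)) vX
                       (take t (buildX d tbX tbY vX vY ys)))
                (foldl (fun v y => place tbY v (choiceY d y)) vY (take t ys)).
Proof.
move=> Hd VX VY; elim: ys => [|y ys IH] vX vY Hinv t /=; first by [].
case: t => [|t] //=; apply: IH; exact: step_inv.
Qed.

Lemma build_inj n d tbX tbY (ys ys' : seq (stepY n)) vX vY :
  size ys = size ys' ->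
  buildX d tbX tbY vX vY ys = buildX d tbX tbY vX vY ys' -> ys = ys'.
Proof.
elim: ys ys' vX vY => [|y ys IH] [|y' ys'] vX vY //= [Hs] E.
have /sigma_inj E1 := congr1 (head (sigma vX vY y)) E.
subst y'; have E2 := congr1 behead E; move: E2 => /= /IH -> //.
Qed.

Lemma sumF_le (s : seq nat) k th :
  \sum_(i < k) nth 0 s i <= k * th + sumn [seq a - th | a <- s].
Proof.
elim: s k => [|a s IH] k.
  by rewrite big1 // => i _; rewrite nth_nil.
case: k => [|k]; first by rewrite big_ord0.
rewrite big_ord_recl /=.
have := IH k; set A := \sum_(i < k) _; set B := sumn _ => H.
rewrite mulSn; set C := k * th; lia.
Qed.

Lemma sumn_sub0 (s : seq nat) a : all (fun b => b <= a) s -> sumn [seq b - a | b <- s] = 0.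
Proof.
elim: s => //= b s IH /andP[Hb Hs]; rewrite IH //; lia.
Qed.

Lemma sumF_eq (s : seq nat) k : sorted geq s -> 0 < k ->
  k * nth 0 s k.-1 + sumn [seq a - nth 0 s k.-1 | a <- s] <= \sum_(i<k) nth 0 s i.
Proof.
elim: s k => [|a s IH] k.
  by move=> _ _; rewrite nth_nil muln0.
case: k => [|k] //= Hp _; rewrite big_ord_recl /=.
have Hall : all (fun b => b <= a) s.
  by apply: (order_path_min _ Hp) => p q r /= H1 H2; apply: leq_trans H2 H1.
have Hs : sorted geq s := path_sorted Hp.
case: k => [|k] /=.
  by rewrite big_ord0 sumn_sub0 // subnn; lia.
set th := nth 0 s k.
have Hth : th <= a.
  rewrite /th; case: (ltnP k (size s)) => Hk.
    by move/allP: Hall; apply; apply: mem_nth.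
  by rewrite nth_default.
have := IH k.+1 Hs isT; rewrite /= -/th.
set A := \sum_(i < k.+1) _; set B := sumn _ => H.
rewrite mulSn; set C := k.+1 * th; lia.
Qed.

Lemma sumn_sorted_G n (v : loads n) th :
  sumn [seq a - th | a <- sorted_loads v] = Gs th v.
Proof.
rewrite sumnE big_map /sorted_loads (perm_big (codom v)); last by rewrite perm_sort.
by rewrite codomE big_map big_enum.
Qed.

Lemma inv_major n (vX vY : loads n) : inv vX vY ->
  majorizes (sorted_loads vX) (sorted_loads vY).
Proof.
move=> [H0 Hth]; split.
  have E : forall v : loads n, sumn (sorted_loads v) = Gs 0 v.
    by move=> v; rewrite -sumn_sorted_G; congr sumn; rewrite -[LHS]map_id; apply: eq_map => a; rewrite subn0.
  by rewrite !E H0.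
case=> [|k]; first by rewrite !big_ord0.
set th := nth 0 (sorted_loads vX) k.
have Hsx : sorted geq (sorted_loads vX).
  by apply: sort_sorted => a b; exact: leq_total.
have := @sumF_eq _ k.+1 Hsx isT; rewrite /= -/th => H2.
apply: leq_trans (sumF_le _ k.+1 th) _; apply: leq_trans _ H2.
by rewrite leq_add2l !sumn_sorted_G.
Qed.

Definition gv n (a b : 'I_n) : nat := if a <= b then b - a else b + n - a.

Lemma gv_lt n (a b : 'I_n) : gv a b < n.
Proof. rewrite /gv; have := ltn_ord a; have := ltn_ord b; case: (leqP a b); lia. Qed.

Lemma gv_pos n (x : stepX n) :
  0 < (\val (sval x).1, Ordinal (gv_lt (sval x).1 (sval x).2)).2.
Proof.
case: x => [[a b] /= Hab]; rewrite /gv.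
have Hne : nat_of_ord a <> nat_of_ord b.
  by move=> E; move/eqP: Hab; apply; apply: val_inj.
have := ltn_ord a; have := ltn_ord b; case: (leqP a b) => H Ha Hb; lia.
Qed.

Definition tau n (x : stepX n) : stepY n :=
  exist _ ((sval x).1, Ordinal (gv_lt (sval x).1 (sval x).2)) (gv_pos x).

Lemma tau_inj n : injective (@tau n).
Proof.
move=> [[a b] Hab] [[a' b'] Hab'] /(congr1 val) /= [Ea Eg]; subst a'.
move: Eg; rewrite /gv /= => Eg.
apply: val_inj => /=; congr pair; apply: ord_inj.
move: Eg; have := ltn_ord a; have := ltn_ord b; have := ltn_ord b'.
case: (leqP a b); case: (leqP a b'); lia.
Qed.

Lemma card_step n : #|{: stepX n}| = #|{: stepY n}|.
Proof.
apply/eqP; rewrite eqn_leq; apply/andP; split.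
  exact: leq_card (@tau_inj n).
exact: leq_card (@sigma_inj n [ffun => 0] [ffun => 0]).
Qed.

Lemma codom_nth m T (x0 : T) (s : seq T) : size s = m ->
  codom [ffun t : 'I_m => nth x0 s t] = s.
Proof.
move=> Hs; rewrite codomE.
rewrite (eq_map (g := nth x0 s \o val)); last by move=> t; rewrite ffunE.
by rewrite map_comp val_enum_ord -Hs; exact: (mkseq_nth x0 s).
Qed.

Lemma codom_inj_ffun m T (w1 w2 : {ffun 'I_m -> T}) : codom w1 = codom w2 -> w1 = w2.
Proof.
move=> E; apply/ffunP => i.
by rewrite -(nth_fgraph_ord (w1 i) i w1) -(nth_fgraph_ord (w1 i) i w2) -!codom_ffun E.
Qed.

Local Open Scope ring_scope.

Theorem mainTheorem1 (R : realFieldType) (n m d : nat)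
  (tbX tbY : loads n -> {set 'I_n} -> 'I_n) :
  prime n -> (1 <= m)%N -> (2 < d)%N -> (d <= n)%N ->
  valid_tiebreak tbX -> valid_tiebreak tbY ->
  (exists mu : {ffun {ffun 'I_m -> stepX n} * {ffun 'I_m -> stepY n} -> R},
     (forall w, 0 <= mu w) /\
     (forall wx, \sum_(wy : {ffun 'I_m -> stepY n}) mu (wx, wy)
                 = 1 / #|{ffun 'I_m -> stepX n}|%:R) /\
     (forall wy, \sum_(wx : {ffun 'I_m -> stepX n}) mu (wx, wy)
                 = 1 / #|{ffun 'I_m -> stepY n}|%:R) /\
     (forall wx wy, mu (wx, wy) != 0 ->
        forall t : nat, (t <= m)%N ->
          majorizes (sorted_loads (loads_at tbX (@choiceX n) wx t))
                    (sorted_loads (loads_at tbY (@choiceY n d) wy t))))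
  /\
  (forall c : nat,
     (#|[set wy : {ffun 'I_m -> stepY n}
         | (c <= max_load (loads_at tbY (@choiceY n d) wy m))%N]|%:R
       / #|{ffun 'I_m -> stepY n}|%:R : R)
     <= #|[set wx : {ffun 'I_m -> stepX n}
         | (c <= max_load (loads_at tbX (@choiceX n) wx m))%N]|%:R
       / #|{ffun 'I_m -> stepX n}|%:R).
Proof.
move=> Pn Hm Hd2 Hdn VX VY.
have Hd : (1 < d)%N by apply: ltn_trans Hd2.
have n1 : (1 < n)%N := prime_gt1 Pn.
have n0 : (0 < n)%N := ltnW n1.
have x0 : stepX n by exists (Ordinal n0, Ordinal n1).
pose B (wy : {ffun 'I_m -> stepY n}) :=
  buildX d tbX tbY [ffun => 0%N] [ffun => 0%N] (codom wy).
pose Phi (wy : {ffun 'I_m -> stepY n}) : {ffun 'I_m -> stepX n} :=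
  [ffun t : 'I_m => nth x0 (B wy) t].
have codPhi : forall wy, codom (Phi wy) = B wy.
  by move=> wy; apply: codom_nth; rewrite size_buildX size_codom card_ord.
have Phi_inj : injective Phi.
  move=> w1 w2 E; have := congr1 (fun f : {ffun 'I_m -> stepX n} => codom f) E.
  rewrite /= !codPhi => /build_inj.
  by rewrite !size_codom => /(_ erefl) /codom_inj_ffun.
have maj : forall wy t, majorizes
    (sorted_loads (loads_at tbX (@choiceX n) (Phi wy) t))
    (sorted_loads (loads_at tbY (@choiceY n d) wy t)).
  move=> wy t; rewrite /loads_at /run codPhi; apply: inv_major.
  by apply: build_inv => //; split => // th; exact: leqnn.
have cardF : #|{ffun 'I_m -> stepX n}| = #|{ffun 'I_m -> stepY n}|.
  by rewrite !card_ffun card_step.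
have Phi_onto : forall wx, exists wy, Phi wy = wx.
  move=> wx; have := inj_card_onto Phi_inj _ wx; rewrite cardF leqnn.
  by move=> /(_ isT) /codomP [wy ->]; exists wy.
split.
  exists [ffun w => if w.1 == Phi w.2 then 1 / #|{ffun 'I_m -> stepY n}|%:R else 0].
  split.
    by move=> w; rewrite ffunE; case: ifP => _ //; rewrite divr_ge0 // ?ler0n.
  split.
    move=> wx; have [wy0 E0] := Phi_onto wx.
    rewrite (bigD1 wy0) //= ffunE /= E0 eqxx big1 ?addr0 ?cardF //.
    move=> wy Hne; rewrite ffunE /=; case: eqP => // E.
    by move: Hne; rewrite -E0 in E; rewrite (Phi_inj _ _ E) eqxx.
  split.
    move=> wy; rewrite (bigD1 (Phi wy)) //= ffunE /= eqxx big1 ?addr0 //.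
    by move=> wx Hne; rewrite ffunE /= (negbTE Hne).
  move=> wx wy; rewrite ffunE /=; case: ifP => [/eqP -> _ t _ | _].
    exact: maj.
  by rewrite eqxx.
move=> c; rewrite cardF; apply: ler_wpM2r; first by rewrite invr_ge0 ler0n.
rewrite ler_nat -(card_imset _ Phi_inj); apply: subset_leq_card.
apply/subsetP => z /imsetP [wy]; rewrite inE => H ->; rewrite inE.
have [_ Hk] := maj wy m; have := Hk 1%N; rewrite !big_ord1 => H1.
exact: leq_trans H H1.
Qed.
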